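(* Let $G$ be a connected graph in $\mathcal{C}$ and $C$ an induced $C_5$ in $G$ with vertices $0,\dots,4$ in cyclic order. For every $i$, no vertex of $X_i$ has two non-adjacent neighbours in $X\setminus X_i$.
   Context: $\mathcal{C}=\mathrm{Free}(\text{claw}, 4K_1, \text{5-wheel}, C_5\text{-twin}, P_5\text{-twin}, K_5-e)$, where $\mathrm{Free}(L)$ is the class of graphs with no induced subgraph isomorphic to a member of $L$; the claw is $K_{1,3}$; $4K_1$ is the edgeless graph on 4 vertices; the 5-wheel is $C_5$ plus a vertex adjacent to all five cycle vertices; the $C_5$-twin is $C_5$ plus a new vertex adjacent to one cycle vertex $v$ and both cycle-neighbours of $v$; the $P_5$-twin is a path $p_1p_2p_3p_4p_5$ plus a new vertex adjacent to exactly $p_2,p_3,p_4$; $K_5-e$ is $K_5$ minus one edge. Given an induced cycle $C$ of length 5 with vertices $0,\dots,4$ in cyclic order (indices taken mod 5): $R$ is the set of vertices outside $C$ with no neighbour in $C$; $X_j$ is the set of vertices outside $C$ whose neighbourhood in $C$ is exactly $\{j,j+1\}$; $Y_j$ is the set of vertices outside $C$ whose neighbourhood in $C$ is exactly $\{j,j+1,j+2,j+3\}$; $X=\bigcup_j X_j$, $Y=\bigcup_j Y_j$. *)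

(* Defs.v *)
From mathcomp Require Import all_boot.
Set Implicit Arguments. Unset Strict Implicit. Unset Printing Implicit Defensive.

Definition simple_graph (T : finType) (e : rel T) : Prop :=
  symmetric e /\ irreflexive e.

Definition connected_graph (T : finType) (e : rel T) : Prop :=
  forall x y : T, connect e x y.

Definition induced_sub (n : nat) (H : rel 'I_n) (T : finType) (e : rel T) : Prop :=
  exists f : 'I_n -> T, injective f /\ forall i j, e (f i) (f j) = H i j.

Definition symc {n : nat} (h : nat -> nat -> bool) : rel 'I_n :=
  fun i j => h (val i) (val j) || h (val j) (val i).

Definition c5h (i j : nat) : bool := (i < 5) && (j < 5) && (j == i.+1 %% 5).

Definition claw : rel 'I_4 := symc (fun i j => (i == 0) && (0 < j)).
Definition fourK1 : rel 'I_4 := fun _ _ => false.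
Definition wheel5 : rel 'I_6 :=
  symc (fun i j => c5h i j || ((j == 5) && (i < 5))).
(* C_5-twin: C_5 on 0..4, new vertex 5 adjacent to 0 and its cycle-neighbours 1,4 *)
Definition C5twin : rel 'I_6 :=
  symc (fun i j => c5h i j || ((j == 5) && ((i == 0) || (i == 1) || (i == 4)))).
Definition P5twin : rel 'I_6 :=
  symc (fun i j => ((j == i.+1) && (j < 5)) ||
                     ((j == 5) && ((i == 1) || (i == 2) || (i == 3)))).
Definition K5e : rel 'I_5 :=
  fun i j => (i != j) && ~~ ((val i == 0) && (val j == 1))
                      && ~~ ((val i == 1) && (val j == 0)).

Definition in_class_C (T : finType) (e : rel T) : Prop :=
  simple_graph e /\
  ~ induced_sub claw e /\ ~ induced_sub fourK1 e /\ ~ induced_sub wheel5 e /\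
  ~ induced_sub C5twin e /\ ~ induced_sub P5twin e /\ ~ induced_sub K5e e.

Definition c5rel : rel 'I_5 := symc c5h.

Definition induced_C5 (T : finType) (e : rel T) (c : 'I_5 -> T) : Prop :=
  injective c /\ forall i j, e (c i) (c j) = c5rel i j.

(* v \in X_j : v outside C with neighbourhood in C exactly {j, j+1} (mod 5) *)
Definition inXj (T : finType) (e : rel T) (c : 'I_5 -> T) (j : 'I_5) (v : T) : bool :=
  (v \notin codom c) &&
  [forall k : 'I_5, e v (c k) == ((val k == val j) || (val k == (val j).+1 %% 5))].

Definition inX (T : finType) (e : rel T) (c : 'I_5 -> T) (v : T) : bool :=
  [exists j : 'I_5, inXj e c j v].

(* Main.v *)
Require Import Defs.
From mathcomp Require Import all_boot.
Set Implicit Arguments. Unset Strict Implicit. Unset Printing Implicit Defensive.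

Definition cyc (x y : nat) : bool := c5h x y || c5h y x.
Definition nb (t x : nat) : bool := (x == t) || (x == t.+1 %% 5).

Definition P (i j k x y : nat) : bool :=
  if x < 5 then
    (if y < 5 then cyc x y else if y == 5 then nb i x else if y == 6 then nb j x else nb k x)
  else if y < 5 then
    (if x == 5 then nb i y else if x == 6 then nb j y else nb k y)
  else if x == 5 then (y == 6) || (y == 7)
  else if x == 6 then (y == 5)
  else (y == 5).

Definition hc (x y : nat) : bool := ((x == 0) && (0 < y)) || ((y == 0) && (0 < x)).
Definition hp0 (i j : nat) : bool := ((j == i.+1) && (j < 5)) ||
                     ((j == 5) && ((i == 1) || (i == 2) || (i == 3))).
Definition hp (x y : nat) : bool := hp0 x y || hp0 y x.

Definition chk (i j k : nat) (w : bool * seq nat) : bool :=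
  let n := if w.1 then 6 else 4 in
  let h := if w.1 then hp else hc in
  let s := w.2 in
  [&& size s == n, uniq s, all (fun x => x < 8) s &
   all (fun x => all (fun y => P i j k (nth 0 s x) (nth 0 s y) == h x y) (iota 0 n)) (iota 0 n)].

Definition tbl : seq (bool * seq nat) := [:: (false,[::]);
 (false,[::]);
 (false,[::]);
 (false,[::]);
 (false,[::]);
 (false,[::]);
 (false,[:: 1; 0; 6; 7]);
 (false,[:: 5; 0; 6; 7]);
 (false,[:: 5; 0; 6; 7]);
 (true,[:: 3; 2; 1; 5; 7; 6]);
 (false,[::]);
 (false,[:: 5; 0; 6; 7]);
 (false,[:: 2; 1; 6; 7]);
 (false,[:: 5; 0; 6; 7]);
 (false,[:: 5; 1; 6; 7]);
 (false,[::]);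
 (false,[:: 5; 0; 6; 7]);
 (false,[:: 5; 0; 6; 7]);
 (false,[:: 3; 2; 6; 7]);
 (false,[:: 5; 1; 6; 7]);
 (false,[::]);
 (true,[:: 3; 2; 1; 5; 6; 7]);
 (false,[:: 5; 1; 6; 7]);
 (false,[:: 5; 1; 6; 7]);
 (false,[:: 0; 1; 6; 7]);
 (false,[:: 0; 4; 6; 7]);
 (false,[::]);
 (true,[:: 4; 0; 1; 5; 7; 6]);
 (false,[:: 5; 2; 6; 7]);
 (false,[:: 5; 2; 6; 7]);
 (false,[::]);
 (false,[::]);
 (false,[::]);
 (false,[::]);
 (false,[::]);
 (true,[:: 4; 0; 1; 5; 6; 7]);
 (false,[::]);
 (false,[:: 2; 1; 6; 7]);
 (false,[:: 5; 1; 6; 7]);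
 (false,[:: 5; 1; 6; 7]);
 (false,[:: 5; 2; 6; 7]);
 (false,[::]);
 (false,[:: 5; 1; 6; 7]);
 (false,[:: 3; 2; 6; 7]);
 (false,[:: 5; 1; 6; 7]);
 (false,[:: 5; 2; 6; 7]);
 (false,[::]);
 (false,[:: 5; 1; 6; 7]);
 (false,[:: 5; 1; 6; 7]);
 (false,[:: 0; 1; 6; 7]);
 (false,[:: 0; 4; 6; 7]);
 (false,[:: 5; 3; 6; 7]);
 (false,[::]);
 (false,[:: 5; 2; 6; 7]);
 (false,[:: 5; 2; 6; 7]);
 (false,[:: 5; 3; 6; 7]);
 (false,[:: 1; 0; 6; 7]);
 (false,[::]);
 (true,[:: 0; 1; 2; 5; 7; 6]);
 (false,[:: 5; 3; 6; 7]);
 (false,[::]);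
 (false,[::]);
 (false,[::]);
 (false,[::]);
 (false,[::]);
 (false,[:: 5; 2; 6; 7]);
 (true,[:: 0; 1; 2; 5; 6; 7]);
 (false,[::]);
 (false,[:: 3; 2; 6; 7]);
 (false,[:: 5; 2; 6; 7]);
 (false,[:: 5; 2; 6; 7]);
 (false,[:: 5; 3; 6; 7]);
 (false,[::]);
 (false,[:: 5; 2; 6; 7]);
 (false,[:: 0; 1; 6; 7]);
 (false,[:: 0; 4; 6; 7]);
 (false,[:: 5; 3; 6; 7]);
 (false,[:: 5; 4; 6; 7]);
 (false,[::]);
 (false,[:: 5; 3; 6; 7]);
 (false,[:: 5; 3; 6; 7]);
 (false,[:: 1; 0; 6; 7]);
 (false,[:: 5; 4; 6; 7]);
 (false,[::]);
 (false,[:: 5; 3; 6; 7]);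
 (false,[:: 5; 4; 6; 7]);
 (false,[:: 5; 4; 6; 7]);
 (false,[:: 2; 1; 6; 7]);
 (false,[::]);
 (true,[:: 1; 0; 4; 5; 6; 7]);
 (false,[::]);
 (false,[::]);
 (false,[::]);
 (false,[::]);
 (false,[::]);
 (false,[:: 5; 3; 6; 7]);
 (false,[:: 5; 3; 6; 7]);
 (true,[:: 1; 0; 4; 5; 7; 6]);
 (false,[::]);
 (false,[:: 0; 1; 6; 7]);
 (false,[:: 0; 4; 6; 7]);
 (false,[:: 5; 4; 6; 7]);
 (false,[:: 5; 4; 6; 7]);
 (true,[:: 2; 1; 0; 5; 7; 6]);
 (false,[::]);
 (false,[:: 5; 4; 6; 7]);
 (false,[:: 1; 0; 6; 7]);
 (false,[:: 5; 0; 6; 7]);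
 (false,[:: 5; 0; 6; 7]);
 (false,[::]);
 (false,[:: 5; 4; 6; 7]);
 (false,[:: 5; 0; 6; 7]);
 (false,[:: 2; 1; 6; 7]);
 (false,[:: 5; 0; 6; 7]);
 (false,[::]);
 (true,[:: 2; 1; 0; 5; 6; 7]);
 (false,[:: 5; 0; 6; 7]);
 (false,[:: 5; 0; 6; 7]);
 (false,[:: 3; 2; 6; 7]);
 (false,[::]);
 (false,[::]);
 (false,[::]);
 (false,[::]);
 (false,[::]);
 (false,[::])].

Definition wit (i j k : nat) := nth (false, [::]) tbl (25 * i + 5 * j + k).

Lemma table_ok : all (fun i => all (fun j => all (fun k =>
   (j == i) || (k == i) || chk i j k (wit i j k)) (iota 0 5)) (iota 0 5)) (iota 0 5).
Proof. by vm_compute. Qed.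

Lemma table_at i j k : i < 5 -> j < 5 -> k < 5 -> j != i -> k != i ->
  chk i j k (wit i j k).
Proof.
move=> hi hj hk hji hki.
have := table_ok => /allP /(_ i); rewrite mem_iota add0n hi => /(_ isT).
move=> /allP /(_ j); rewrite mem_iota add0n hj => /(_ isT).
move=> /allP /(_ k); rewrite mem_iota add0n hk => /(_ isT).
by rewrite (negbTE hji) (negbTE hki).
Qed.

Section G.
Variables (T : finType) (e : rel T) (c : 'I_5 -> T) (v a b : T).
Definition gv (x : nat) : T :=
  if x < 5 then c (inord x) else if x == 5 then v else if x == 6 then a else b.
End G.

Lemma transfer (T : finType) (e : rel T) (g : nat -> T) (i j k : nat) n (H : rel 'I_n)
   (hn : nat -> nat -> bool) (s : seq nat) :
  (forall x y, x < 8 -> y < 8 -> g x = g y -> x = y) ->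
  (forall x y, x < 8 -> y < 8 -> e (g x) (g y) = P i j k x y) ->
  (forall x y : 'I_n, H x y = hn x y) ->
  size s = n -> uniq s -> all (fun x => x < 8) s ->
  all (fun x => all (fun y => P i j k (nth 0 s x) (nth 0 s y) == hn x y) (iota 0 n)) (iota 0 n) ->
  induced_sub H e.
Proof.
move=> ginj gadj Hh sz us a8 ch.
have lt8 : forall x : 'I_n, nth 0 s x < 8.
  move=> x; apply: (allP a8); apply: mem_nth; rewrite sz; exact: ltn_ord.
exists (fun x : 'I_n => g (nth 0 s x)); split.
  move=> x y h0; have h := ginj _ _ (lt8 x) (lt8 y) h0; apply: val_inj.
  by apply/eqP; rewrite -(nth_uniq 0 _ _ us) ?sz ?ltn_ord // h.
move=> x y; rewrite gadj ?lt8 // Hh.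
move/allP: ch => /(_ x); rewrite mem_iota add0n ltn_ord => /(_ isT).
by move/allP => /(_ y); rewrite mem_iota add0n ltn_ord => /(_ isT) /eqP.
Qed.

Theorem claim18 (T : finType) (e : rel T) (c : 'I_5 -> T) :
  in_class_C e -> connected_graph e -> induced_C5 e c ->
  forall (i : 'I_5) (v a b : T),
    inXj e c i v ->
    inX e c a -> ~~ inXj e c i a ->
    inX e c b -> ~~ inXj e c i b ->
    e v a -> e v b -> a != b -> e a b.
Proof.
move=> [[Hsym Hirr] [Nclaw [_ [_ [_ [Np5 _]]]]]] _ [cinj Hc] i v a b Hv
  /existsP [j Ha] Hna /existsP [k Hb] Hnb eva evb nab.
apply/negP => eab.
have Hji : j != i by apply: contraNneq Hna => <-.
have Hki : k != i by apply: contraNneq Hnb => <-.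
have nbP : forall (t : 'I_5) w, inXj e c t w -> (w \notin codom c) /\
    forall p, p < 5 -> e w (c (inord p)) = nb t p.
  move=> t w /andP [hw /forallP hf]; split => // p hp.
  have hv : val (inord p : 'I_5) = p := inordK hp.
  by move/eqP: (hf (inord p)) => ->; rewrite hv.
have [vn Fv] := nbP _ _ Hv.
have [an Fa] := nbP _ _ Ha.
have [bn Fb] := nbP _ _ Hb.
have Fc : forall p q, p < 5 -> q < 5 -> e (c (inord p)) (c (inord q)) = cyc p q.
  move=> p q hp hq; have hv : val (inord p : 'I_5) = p := inordK hp.
  have hw : val (inord q : 'I_5) = q := inordK hq.
  by rewrite Hc /c5rel /symc hv hw.
have nc : forall w p, w \notin codom c -> c p != w.
  move=> w p hw; apply: contraNneq hw => <-; exact: codom_f.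
have nc' : forall w p, w \notin codom c -> c p = w -> False.
  by move=> w p hw hp; move: (nc w p hw); rewrite hp eqxx.
have va : v != a by apply: contraNneq Hna => <-.
have vb : v != b by apply: contraNneq Hnb => <-.
set g := gv c v a b.
have ginj : forall x y, x < 8 -> y < 8 -> g x = g y -> x = y.
  move=> x y hx hy; rewrite /g /gv.
  case: x hx => [|[|[|[|[|[|[|[|x]]]]]]]] hx //;
  case: y hy => [|[|[|[|[|[|[|[|y]]]]]]]] hy //= => h;
  first [ by move/cinj/(congr1 (@nat_of_ord 5)): h; rewrite !inordK
        | exfalso; exact: nc' _ _ vn h
        | exfalso; exact: nc' _ _ vn (esym h)
        | exfalso; exact: nc' _ _ an h
        | exfalso; exact: nc' _ _ an (esym h)
        | exfalso; exact: nc' _ _ bn h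
        | exfalso; exact: nc' _ _ bn (esym h)
        | by move: va; rewrite h eqxx
        | by move: vb; rewrite h eqxx
        | by move: nab; rewrite h eqxx
        | by move: va; rewrite -h eqxx
        | by move: vb; rewrite -h eqxx
        | by move: nab; rewrite -h eqxx ].
have eab' : e a b = false by apply/negP.
have eba : e b a = false by rewrite Hsym.
have gadj : forall x y, x < 8 -> y < 8 -> e (g x) (g y) = P i j k x y.
  move=> x y hx hy; rewrite /g /gv.
  case: x hx => [|[|[|[|[|[|[|[|x]]]]]]]] hx //;
  case: y hy => [|[|[|[|[|[|[|[|y]]]]]]]] hy //=;
  first [ by rewrite Fc | by rewrite Fv | by rewrite Fa | by rewrite Fb
        | by rewrite Hsym Fv | by rewrite Hsym Fa | by rewrite Hsym Fb
        | by rewrite Hirr | by rewrite eva | by rewrite evb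
        | by rewrite Hsym eva | by rewrite Hsym evb
        | by rewrite eab' | by rewrite eba ].
have := table_at (ltn_ord i) (ltn_ord j) (ltn_ord k) Hji Hki.
case: (wit i j k) => [[] s] /and4P [/eqP sz us a8 ch].
- by apply: Np5; apply: (transfer ginj gadj (hn := hp)) sz us a8 ch.
- by apply: Nclaw; apply: (transfer ginj gadj (hn := hc)) sz us a8 ch.
Qed.
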